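(* Let $K$ be an algebraically closed field of characteristic $\ne 2$, $n\ge2$ even, $G=\mathrm{PGL}_n(K)$, and let $D$ be a nontrivial toral elementary abelian $2$-subgroup of $G$ with $C_G(D)=C_G(D)^\circ$. Then $D$ contains an involution not $G$-conjugate to $e_{n/2}$, the image in $G$ of $\mathrm{diag}(-I_{n/2},I_{n/2})$.
   Context: Toral: contained in a maximal torus of $G$. $C_G(D)^\circ$ denotes the identity component of the centralizer. *)

(* Defs.v *)
(* PGL_n(K) modelled via representatives in GL_n(K). *)
From HB Require Import structures.
From mathcomp Require Import all_boot all_order all_algebra.
From mathcomp Require Import mpoly.
Set Implicit Arguments. Unset Strict Implicit. Unset Printing Implicit Defensive.
Import Order.TTheory GRing.Theory.
Local Open Scope ring_scope.

Section PGL.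
Variables (K : fieldType) (n : nat).

Definition proj_eq (A B : 'M[K]_n) : Prop :=
  exists2 c : K, c != 0 & A = c *: B.

(* Zariski-closed subsets of GL_n(K) (subspace topology from affine n^2-space,
   which is the variety topology of the principal open GL_n = D(det)). *)
Definition zariski_closed_GL (F : 'M[K]_n -> Prop) : Prop :=
  exists P : {mpoly K[n * n]} -> Prop,
    forall A : 'M[K]_n, A \in unitmx ->
      (F A <-> forall p, P p -> p.@[fun i => mxvec A 0 i] = 0).

Definition zariski_connected_GL (C : 'M[K]_n -> Prop) : Prop :=
  ~ exists F1 F2 : 'M[K]_n -> Prop,
      [/\ zariski_closed_GL F1 /\ zariski_closed_GL F2,
          (forall A, C A -> F1 A \/ F2 A),
          (exists A, C A /\ F1 A), (exists A, C A /\ F2 A)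
        & (forall A, C A -> F1 A -> F2 A -> False)].

(* D is (the full preimage in GL_n(K) of) a subgroup of PGL_n(K). *)
Definition pgl_subgroup (D : 'M[K]_n -> Prop) : Prop :=
  [/\ forall A, D A -> A \in unitmx,
      D 1%:M,
      (forall A B, D A -> proj_eq B A -> D B),
      (forall A B, D A -> D B -> D (A *m B))
    & (forall A, D A -> D (invmx A))].

Definition pgl_elem_abelian2 (D : 'M[K]_n -> Prop) : Prop :=
  [/\ (exists s : seq 'M[K]_n, forall A, D A -> exists2 B, B \in s & proj_eq A B),
      (forall A B, D A -> D B -> proj_eq (A *m B) (B *m A))
    & (forall A, D A -> proj_eq (A *m A) 1%:M)].

Definition pgl_nontrivial (D : 'M[K]_n -> Prop) : Prop :=
  exists2 A, D A & ~ proj_eq A 1%:M.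

(* Toral: contained in a maximal torus of PGL_n(K), i.e. in a conjugate of the
   image of the diagonal torus. *)
Definition pgl_toral (D : 'M[K]_n -> Prop) : Prop :=
  exists2 g : 'M[K]_n, g \in unitmx &
    forall A, D A -> exists d : 'rV[K]_n, proj_eq A (g *m diag_mx d *m invmx g).

(* Preimage in GL_n(K) of the centralizer C_G(D), G = PGL_n(K). *)
Definition pgl_centralizer (D : 'M[K]_n -> Prop) (g : 'M[K]_n) : Prop :=
  g \in unitmx /\ forall A, D A -> proj_eq (g *m A *m invmx g) A.

Definition pgl_conj (A B : 'M[K]_n) : Prop :=
  exists2 g : 'M[K]_n, g \in unitmx & proj_eq (g *m A *m invmx g) B.

Definition e_half : 'M[K]_n :=
  diag_mx (\row_(i < n) (if (i < n./2)%N then -1 else 1)).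

End PGL.

(* Main.v *)
Require Import Defs.
From HB Require Import structures.
From mathcomp Require Import all_boot all_order all_algebra.
From mathcomp Require Import mpoly.
From Stdlib Require Import Classical ClassicalEpsilon.
From mathcomp Require Import fingroup perm.
From mathcomp Require Import zify.
Set Implicit Arguments. Unset Strict Implicit. Unset Printing Implicit Defensive.
Import Order.TTheory GRing.Theory.
Local Open Scope ring_scope.

Section Comb.
Variable n : nat.
Local Notation T := {ffun 'I_n -> bool}.
Definition fxor (u v : T) : T := [ffun i => u i (+) v i].
Definition f0 : T := [ffun _ => false].
Definition sgnz (b : bool) : int := if b then -1 else 1.

Lemma sgnzD a b : sgnz (a (+) b) = sgnz a * sgnz b.
Proof. by case: a; case: b; rewrite /sgnz /= ?mulr1 ?mul1r ?mulrNN ?mulr1. Qed.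

Lemma fxorK u : involutive (fxor u).
Proof. by move=> v; apply/ffunP => i; rewrite !ffunE addbA addbb. Qed.

Variable V : {set T}.
Hypothesis h0 : f0 \in V.
Hypothesis hcl : forall u v, u \in V -> v \in V -> fxor u v \in V.

Lemma charsum (phi : T -> bool)
  (hadd : forall u v, u \in V -> v \in V -> phi (fxor u v) = phi u (+) phi v)
  u : u \in V -> phi u -> \sum_(v in V) sgnz (phi v) = 0.
Proof.
move=> hu hpu.
have inj : injective (fxor u) by apply: can_inj (fxorK u).
have E : \sum_(v in V) sgnz (phi v) = - \sum_(v in V) sgnz (phi v).
  rewrite {1}(reindex_inj inj) /= -sumrN.
  apply: eq_big => v.
    apply/idP/idP => hv; last exact: hcl.
    by rewrite -(fxorK u v); apply: hcl.
  move=> hv; have hv' : v \in V by rewrite -(fxorK u v); apply: hcl.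
  by rewrite hadd // hpu sgnzD /sgnz /= mulN1r.
move: E; set S := \sum_(v in V) _ => E.
have : S + S = 0 by rewrite {1}E addNr.
lia.
Qed.

Lemma sum_sgnz (b : 'I_n -> bool) :
  \sum_i sgnz (b i) = (n%:Z - (#|[set i | b i]|.*2)%:Z).
Proof.
rewrite (bigID b) /=.
rewrite (eq_bigr (fun _ => -1)); last by move=> i ->.
rewrite [X in _ + X](eq_bigr (fun _ => 1)); last by move=> i /negbTE ->.
rewrite !sumr_const.
have := cardsC [set i | b i]; rewrite card_ord.
have -> : #|[pred i | b i]| = #|[set i | b i]| by apply: eq_card => i; rewrite inE.
have -> : #|[pred i | ~~ b i]| = #|~: [set i | b i]| by apply: eq_card => i; rewrite !inE.
set a := #|[set i | b i]|; set c := #|~: [set i | b i]| => hc.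
rewrite -hc -mulr_natl mulrN1 !natz. lia.
Qed.


Hypothesis hcnt : forall w, w \in V -> w != f0 -> (#|[set i | w i]|.*2)%N = n.

Lemma fourier (tau : T -> bool)
  (hadd : forall u v, u \in V -> v \in V -> tau (fxor u v) = tau u (+) tau v) :
  (#|V| * #|[set i | [forall v in V, v i == tau v]]|)%N = n.
Proof.
have tau0 : tau f0 = false.
  have := hadd _ _ h0 h0.
  have -> : fxor f0 f0 = f0 by apply/ffunP => i; rewrite !ffunE.
  by rewrite addbb.
pose S := \sum_(v in V) \sum_i sgnz (v i (+) tau v).
have E1 : S = (#|V| * #|[set i | [forall v in V, v i == tau v]]|)%N%:Z.
  rewrite /S exchange_big /=.
  rewrite (bigID (fun i => [forall v in V, v i == tau v])) /=.
  rewrite [X in _ + X]big1; last first.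
    move=> i /forallPn [u]; rewrite negb_imply => /andP [hu hne].
    apply: (charsum (phi := fun v => v i (+) tau v) _ hu).
      by move=> x y hx hy; rewrite ffunE hadd //; case: (x i); case: (y i); case: (tau x); case: (tau y).
    by move: hne; case: (u i); case: (tau u).
  rewrite addr0 (eq_bigr (fun _ => (#|V|)%:R)); last first.
    move=> i /forallP hi; rewrite -[RHS]sumr_const; apply: eq_bigr => v hv.
    by have := hi v; rewrite hv /= => /eqP ->; rewrite addbb.
  rewrite sumr_const -[in RHS]natz natrM mulr_natr; congr (_ *+ _).
  by apply: eq_card => i; rewrite inE.
have E2 : S = n%:Z.
  rewrite /S (eq_bigr (fun v => sgnz (tau v) * (n%:Z - (#|[set i | v i]|.*2)%:Z))); last first.
    move=> v hv; rewrite -sum_sgnz mulr_sumr; apply: eq_bigr => i _.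
    by rewrite sgnzD mulrC.
  rewrite (bigD1 f0) //= tau0 big1 ?addr0; last first.
    move=> v /andP [hv hne]; rewrite hcnt //; lia.
  have -> : #|[set i | f0 i]| = 0%N by apply/eqP; rewrite cards_eq0; apply/eqP/setP => i; rewrite !inE ffunE.
  by rewrite /sgnz mul1r subr0.
by apply/eqP; rewrite -eqz_nat -E1 E2.
Qed.


Lemma mkperm (j : 'I_n) :
  exists s : 'S_n, forall v i, v \in V -> v (s i) = v i (+) v j.
Proof.
pose F i := [set p | [forall v in V, v p == v i]].
pose G i := [set p | [forall v in V, v p == v i (+) v j]].
have hVpos : (0 < #|V|)%N by apply/card_gt0P; exists f0.
have cardFG i : #|F i| = #|G i|.
  apply/eqP; rewrite -(eqn_pmul2l hVpos); apply/eqP.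
  rewrite (fourier (tau := fun v => v i)); last by move=> u v _ _; rewrite ffunE.
  rewrite (fourier (tau := fun v => v i (+) v j)) //.
  by move=> u v _ _; rewrite !ffunE; case: (u i); case: (v i); case: (u j); case: (v j).
have FiP i : i \in F i by rewrite inE; apply/forall_inP.
pose f i := nth i (enum (G i)) (index i (enum (F i))).
have hidx i : (index i (enum (F i)) < size (enum (G i)))%N.
  by rewrite -cardE -cardFG cardE index_mem mem_enum.
have fG i : f i \in G i by rewrite -mem_enum mem_nth.
have finj : injective f.
  move=> i i' hf.
  have e : forall v, v \in V -> v i = v i'.
    move=> v hv.
    have := fG i; have := fG i'; rewrite -hf !inE => /forall_inP/(_ v hv)/eqP.
    move=> /[swap] /forall_inP/(_ v hv)/eqP ->.
    by case: (v i); case: (v i'); case: (v j).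
  have eF : F i = F i'.
    by apply/setP => p; rewrite !inE; apply: eq_forallb_in => v hv; rewrite e.
  have eG : G i = G i'.
    by apply/setP => p; rewrite !inE; apply: eq_forallb_in => v hv; rewrite e.
  have hi' := hidx i'; rewrite -eG -eF in hi'.
  move: hf; rewrite /f -eG -eF [nth i' _ _](set_nth_default i _ hi') => /eqP.
  rewrite nth_uniq ?enum_uniq //.
  move/eqP => hix.
  have h1 : i \in enum (F i) by rewrite mem_enum.
  have h2 : i' \in enum (F i) by rewrite mem_enum eF.
  exact: (@index_inj _ i _ _ _ h1 h2 hix).
exists (perm finj) => v i hv.
rewrite permE.
by have := fG i; rewrite inE => /forall_inP/(_ v hv)/eqP.
Qed.

End Comb.

Section Mx.
Variable K : fieldType.

Definition sv n (w : {ffun 'I_n -> bool}) : 'rV[K]_n := \row_i (if w i then -1 else 1).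

Lemma diag_sv_mul n (u v : {ffun 'I_n -> bool}) :
  diag_mx (sv u) *m diag_mx (sv v) = diag_mx (sv (fxor u v)).
Proof.
apply/matrixP => i j; rewrite mul_diag_mx !mxE ffunE.
case: eqP => [->|_]; last by rewrite !mulr0.
by case: (u j); case: (v j); rewrite /= !mulr1n ?mulrNN ?mulr1 ?mul1r.
Qed.

Lemma diag_sv0 n : diag_mx (sv (f0 n)) = 1%:M.
Proof. by apply/matrixP => i j; rewrite !mxE ffunE. Qed.

Lemma perm_diag n (s : 'S_n) (w : {ffun 'I_n -> bool}) b
  (hw : forall i, w (s i) = w i (+) b) :
  perm_mx s *m diag_mx (sv w) = (if b then -1 else 1) *: (diag_mx (sv w) *m perm_mx s).
Proof.
apply/matrixP => i j; rewrite mul_mx_diag mul_diag_mx !mxE.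
case: eqP => [<-|_]; last by rewrite /= !mulr0n mul0r !mulr0.
rewrite hw /= !mulr1n; case: (w i); case: (b); rewrite /= ?mul1r ?mulr1 ?mulrNN ?mulr1 //.
Qed.

Lemma rank_diag n (d : 'rV[K]_n) : \rank (diag_mx d) = (\sum_i (d ord0 i != 0%R))%N.
Proof.
elim: n d => [|n IH] d.
  by rewrite flatmx0 mxrank0 big_ord0.
change (@mxrank K (1+n)%N (1+n)%N (@diag_mx K (1+n)%N d) = (\sum_i (d ord0 i != 0%R))%N).
rewrite -[X in @diag_mx _ _ X](@hsubmxK _ 1 1 n) diag_mx_row rank_diag_block_mx IH rank_rV.
rewrite big_ord_recl /=.
congr (_ + _)%N.
  have -> : (ord0 : 'I_(n.+1)) = lshift n (0 : 'I_1) by apply: val_inj.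
  congr (~~ _); apply/eqP/eqP => h.
    by move/matrixP: h => /(_ 0 0); rewrite !mxE eqxx mulr1n.
  by apply/matrixP => i j; rewrite !ord1 !mxE eqxx /= mulr1n h.
apply: eq_bigr => i _.
have -> : lift ord0 i = rshift 1 i by apply: val_inj.
by rewrite mxE.
Qed.

Lemma sum_bool_card n (b : 'I_n -> bool) : (\sum_i b i)%N = #|[set i | b i]|.
Proof.
rewrite -sum1_card [RHS]big_mkcond /=; apply: eq_bigr => i _.
by rewrite inE; case: (b i).
Qed.

Lemma rank_conj n (Y M : 'M[K]_n) : Y \in unitmx -> \rank (invmx Y *m M *m Y) = \rank M.
Proof.
move=> hY; rewrite mxrankMfree ?row_free_unit //.
apply/eqP; rewrite eqn_leq mxrankM_maxr /=.
by rewrite -{1}(mulKVmx hY M) mxrankM_maxr.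
Qed.

End Mx.

Section Mx2.
Variable K : fieldType.

Lemma card_lt_half n m (hm : (m <= n)%N) : #|[set i : 'I_n | (i < m)%N]| = m.
Proof.
have -> : [set i : 'I_n | (i < m)%N] = widen_ord hm @: [set: 'I_m].
  apply/setP => i; rewrite inE; apply/idP/imsetP => [hi|[j _ ->]]; last by rewrite /= ltn_ord.
  by exists (Ordinal hi) => //; apply: val_inj.
have inj : injective (widen_ord hm) by move=> x y /(congr1 val) h; apply: val_inj.
by rewrite (card_imset _ inj) cardsT card_ord.
Qed.

Lemma card_setE n (P Q : pred 'I_n) : P =1 Q -> #|[set i | P i]| = #|[set i | Q i]|.
Proof. by move=> h; apply: eq_card => i; rewrite !inE h. Qed.

Lemma diag_sub1 n (d : 'rV[K]_n) (a : K) :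
  a *: diag_mx d - 1%:M = diag_mx (\row_i (a * d 0 i - 1)).
Proof.
apply/matrixP => i j; rewrite !mxE.
by case: eqP => _; rewrite /= ?mulr1n ?mulr0n ?mulr0 ?subr0.
Qed.

Lemma count_conj n (h2 : (2%:R : K) != 0) (hev : ~~ odd n) (hn : (0 < n)%N)
  (w : {ffun 'I_n -> bool}) (Y : 'M[K]_n) (c : K) (hY : Y \in unitmx)
  (h : Y *m diag_mx (sv K w) = c *: (e_half K n *m Y)) :
  (#|[set i | w i]|.*2)%N = n.
Proof.
set S := diag_mx (sv K w); set E := e_half K n.
have SS : S *m S = 1%:M.
  rewrite /S diag_sv_mul -(diag_sv0 K n); congr diag_mx; congr sv.
  by apply/ffunP => i; rewrite !ffunE addbb.
have EE : E *m E = 1%:M.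
  apply/matrixP => i j; rewrite /E /e_half mul_diag_mx !mxE.
  by case: (i == j); case: (i < n./2)%N; rewrite ?mulr0n ?mulr1n ?mulr0 ?mulrNN ?mulr1.
have hS : S = c *: (invmx Y *m E *m Y).
  by rewrite -(mulKmx hY S) h -scalemxAr mulmxA.
have cc : c * c = 1.
  have := SS; rewrite {1 2}hS -scalemxAl -scalemxAr scalerA.
  rewrite !mulmxA (mulmxK hY) -[invmx Y *m E *m E]mulmxA EE mulmx1 (mulVmx hY).
  move/matrixP => /(_ (Ordinal hn) (Ordinal hn)); rewrite !mxE eqxx mulr1n.
  by rewrite mulr1.
have hrk : \rank (S - 1%:M) = \rank (c *: E - 1%:M).
  rewrite -(rank_conj (c *: E - 1%:M) hY) mulmxBr mulmxBl mulmx1 (mulVmx hY).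
  by rewrite -scalemxAr -scalemxAl hS.
move: hrk; rewrite -[S]scale1r /S /E /e_half !diag_sub1 !rank_diag !sum_bool_card.
rewrite (@card_setE _ _ (fun i => w i)); last first.
  move=> i; rewrite !mxE mul1r /=.
  case: (w i); rewrite ?subrr ?eqxx //.
  by rewrite -opprD oppr_eq0.
have [->|->] : c = 1 \/ c = -1.
  have : (c - 1) * (c + 1) = 0 by rewrite mulrDr mulrBl mulr1 mul1r cc addrA subrK subrr.
  by move/eqP; rewrite mulf_eq0 subr_eq0 addr_eq0 => /orP [] /eqP; [left|right].
- move=> hrk; rewrite [X in _ = X](@card_setE _ _ (fun i : 'I_n => (i < n./2)%N)) in hrk; last first.
    move=> i; rewrite !mxE mul1r /=.
    case: (i < n./2)%N; rewrite ?subrr ?eqxx //.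
    by rewrite -opprD oppr_eq0.
  rewrite hrk card_lt_half; last by have := odd_double_half n; lia.
  have := odd_double_half n; rewrite (negbTE hev) add0n => e.
  by rewrite -[in RHS]e.
- move=> hrk; rewrite [X in _ = X](@card_setE _ _ (fun i : 'I_n => ~~ (i < n./2)%N)) in hrk; last first.
    move=> i; rewrite !mxE mulN1r /=.
    case: (i < n./2)%N; rewrite /= ?opprK ?subrr ?eqxx //.
    by rewrite -opprD oppr_eq0.
  have := cardsC [set i : 'I_n | (i < n./2)%N].
  rewrite card_lt_half ?card_ord => [hc|]; last by have := odd_double_half n; lia.
  have e2 : [set i : 'I_n | ~~ (i < n./2)%N] = ~: [set i : 'I_n | (i < n./2)%N].
    by apply/setP => i; rewrite !inE.
  rewrite hrk e2; have := odd_double_half n; rewrite (negbTE hev) add0n => e.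
  lia.
Qed.

End Mx2.

Definition pb (P : Prop) : bool := if excluded_middle_informative P then true else false.
Lemma pbP (P : Prop) : pb P <-> P.
Proof. by rewrite /pb; case: excluded_middle_informative. Qed.

Section Closed.
Variable K : fieldType.
Variable n : nat.

Definition comm_poly (L R : 'M[K]_n) (r c : 'I_n) : {mpoly K[n * n]} :=
  \sum_k ('X_(mxvec_index r k) * (L k c)%:MP - (R r k)%:MP * 'X_(mxvec_index k c)).

Lemma comm_polyE (L R A : 'M[K]_n) r c :
  (comm_poly L R r c).@[fun i => mxvec A 0 i] = (A *m L - R *m A) r c.
Proof.
rewrite /comm_poly raddf_sum !mxE -sumrB; apply: eq_bigr => k _.
by rewrite raddfB /= !mevalM !mevalXU !mevalC !mxvecE.
Qed.

Lemma closed_comm (L R : 'M[K]_n) : zariski_closed_GL (fun X => X *m L = R *m X).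
Proof.
exists (fun p => exists r c, p = comm_poly L R r c) => A _; split.
  by move=> h p [r [c ->]]; rewrite comm_polyE h subrr mxE.
move=> h; apply/eqP; rewrite -subr_eq0; apply/eqP/matrixP => r c.
by rewrite -comm_polyE mxE; apply: h; exists r, c.
Qed.

End Closed.

Lemma projsym (K : fieldType) n (A B : 'M[K]_n) : proj_eq A B -> proj_eq B A.
Proof.
case=> c hc ->; exists c^-1; first by rewrite invr_eq0.
by rewrite scalerA mulVf // scale1r.
Qed.

Lemma unit0_false (K : fieldType) n (hn : (0 < n)%N) : (0 : 'M[K]_n) \in unitmx -> False.
Proof.
move=> h; have := mulmxV h; rewrite mul0mx => /matrixP /(_ (Ordinal hn) (Ordinal hn)).
by rewrite !mxE eqxx mulr1n => /eqP; rewrite eq_sym oner_eq0.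
Qed.

Lemma scalar_inj (K : fieldType) n (hn : (0 < n)%N) (a b : K) :
  a *: (1%:M : 'M[K]_n) = b *: 1%:M -> a = b.
Proof.
move/matrixP => /(_ (Ordinal hn) (Ordinal hn)); rewrite !mxE eqxx mulr1n.
by rewrite !mulr1.
Qed.

Unset Implicit Arguments.

Theorem theorem4p12 (K : closedFieldType) (n : nat)
  (hchar : (2%:R : K) != 0) (hn : (2 <= n)%N) (hev : ~~ odd n)
  (D : 'M[K]_n -> Prop)
  (hD : pgl_subgroup D) (hab : pgl_elem_abelian2 D)
  (hnt : pgl_nontrivial D) (htor : pgl_toral D)
  (hconn : zariski_connected_GL (pgl_centralizer D)) :
  exists A : 'M[K]_n,
    [/\ D A, ~ proj_eq A 1%:M & ~ pgl_conj A (e_half K n)].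
Proof.
have hn0 : (0 < n)%N by apply: leq_trans hn.
pose i0 : 'I_n := Ordinal hn0.
case: hD => hunit hD1 hDproj hDmul hDinv.
case: hab => _ hcomm hsq.
case: htor => g0 hg0 hdiag.
apply: NNPP => hno.
have hall : forall A, D A -> ~ proj_eq A 1%:M -> pgl_conj A (e_half K n).
  move=> A hA hA1; apply: NNPP => hc; apply: hno; exists A; split => //.
pose Q (w : {ffun 'I_n -> bool}) := g0 *m diag_mx (sv K w) *m invmx g0.
have Q0 : Q (f0 n) = 1%:M by rewrite /Q diag_sv0 mulmx1 (mulmxV hg0).
have QM u v : Q (fxor u v) = Q u *m Q v.
  by rewrite /Q -diag_sv_mul !mulmxA (mulmxKV hg0).
have QS w : diag_mx (sv K w) = invmx g0 *m Q w *m g0.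
  by rewrite /Q !mulmxA (mulVmx hg0) mul1mx (mulmxKV hg0).
have Qnorm : forall A, D A -> exists w : {ffun 'I_n -> bool}, w i0 = false /\ proj_eq A (Q w).
  move=> A hA.
  have [d hAd] := hdiag A hA.
  case: hAd => c hc hAc.
  have [e he hAA] := hsq A hA.
  set M := diag_mx d.
  have hMM : M *m M = ((c * c)^-1 * e) *: 1%:M.
    have E0 : A *m A = (c * c) *: (g0 *m (M *m M) *m invmx g0).
      rewrite hAc -scalemxAl -scalemxAr scalerA !mulmxA (mulmxKV hg0).
      by rewrite -[g0 *m M *m M]mulmxA.
    have E1 : g0 *m (M *m M) *m invmx g0 = ((c * c)^-1 * e) *: 1%:M.
      by rewrite -scalerA -hAA E0 scalerA mulVf ?mulf_neq0 // scale1r.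
    have -> : M *m M = invmx g0 *m (g0 *m (M *m M) *m invmx g0) *m g0.
      by rewrite !mulmxA (mulVmx hg0) mul1mx (mulmxKV hg0).
    by rewrite E1 -scalemxAr -scalemxAl mulmx1 (mulVmx hg0).
  have hdd i : d 0 i * d 0 i = (c * c)^-1 * e.
    move/matrixP: hMM => /(_ i i); rewrite mul_diag_mx !mxE eqxx mulr1n.
    by rewrite mulr1.
  have hd0 : d 0 i0 != 0.
    apply/eqP => h0; have := hdd i0; rewrite h0 mul0r => /esym/eqP.
    by rewrite mulf_eq0 invr_eq0 mulf_eq0 (negbTE hc) (negbTE he).
  pose w := ([ffun i => d 0 i != d 0 i0] : {ffun 'I_n -> bool}).
  have hdr : d = d 0 i0 *: sv K w.
    apply/rowP => i; rewrite !mxE ffunE.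
    case: eqP => [->|hne]; first by rewrite /= mulr1.
    have : (d 0 i - d 0 i0) * (d 0 i + d 0 i0) = 0.
      rewrite mulrDr !mulrBl hdd (hdd i0) (mulrC (d 0 i0)).
      by rewrite addrA subrK subrr.
    move/eqP; rewrite mulf_eq0 subr_eq0 (introF eqP hne) /= addr_eq0 => /eqP ->.
    by rewrite mulrN1.
  have hdw : M = d 0 i0 *: diag_mx (sv K w).
    rewrite /M {1}hdr; apply/matrixP => i j; rewrite !mxE.
    by rewrite mulrnAr.
  exists w; split; first by rewrite ffunE eqxx.
  exists (c * d 0 i0); first by rewrite mulf_neq0.
  by rewrite hAc -/M hdw -scalemxAr -scalemxAl scalerA.
have DQ : forall A w, D A -> proj_eq A (Q w) -> D (Q w).
  by move=> A w hA hp; apply: hDproj hA (projsym hp).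
pose V0 := [set w : {ffun 'I_n -> bool} | (w i0 == false) && pb (D (Q w))].
have inV0 w : (w \in V0) <-> (w i0 = false /\ D (Q w)).
  rewrite inE; split.
    by case/andP => /eqP -> /pbP.
  by case=> -> h; rewrite eqxx; apply/pbP.
have h0 : f0 n \in V0 by apply/inV0; rewrite ffunE Q0.
have hcl : forall u v, u \in V0 -> v \in V0 -> fxor u v \in V0.
  move=> u v /inV0 [hu hu'] /inV0 [hv hv']; apply/inV0.
  by rewrite ffunE hu hv QM; split => //; apply: hDmul.
have Qnot1 : forall w : {ffun 'I_n -> bool}, w i0 = false -> w != f0 n -> ~ proj_eq (Q w) 1%:M.
  move=> w hw hne [c hc hQ].
  have : diag_mx (sv K w) = c *: 1%:M.
    by rewrite QS hQ -scalemxAr -scalemxAl mulmx1 (mulVmx hg0).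
  have [j hj] : exists j, w j.
    apply: NNPP => hnj; move/eqP: hne; apply; apply/ffunP => j; rewrite ffunE.
    by apply/negbTE/negP => hj; apply: hnj; exists j.
  move/matrixP => hm.
  have := hm i0 i0; have := hm j j; rewrite !mxE !eqxx !mulr1n hw hj => <-.
  move/eqP; rewrite -subr_eq0 opprK -mulr2n => /eqP h2.
  by move: hchar; rewrite h2 eqxx.
have hcnt : forall w : {ffun 'I_n -> bool}, w \in V0 -> w != f0 n -> (#|[set i | w i]|.*2)%N = n.
  move=> w /inV0 [hw hDw] hne.
  have [X hX [c hc hXc]] := hall _ hDw (Qnot1 _ hw hne).
  apply: (@count_conj K n hchar hev hn0 w (X *m g0) c); first by rewrite unitmx_mul hX.
  have e1 : X *m Q w = c *: (e_half K n *m X).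
    by rewrite scalemxAl -hXc (mulmxKV hX).
  rewrite QS; move: (Q w) e1 => q e1.
  by rewrite -!mulmxA (mulKVmx hg0) !mulmxA e1 -scalemxAl.
case: hnt => A0 hA0 hA01.
have [a [ha0 hA0a]] := Qnorm _ hA0.
have haV : a \in V0 by apply/inV0; split => //; exact: DQ hA0a.
have hane : a != f0 n.
  apply/eqP => ha; apply: hA01; move: hA0a; rewrite ha Q0.
  by [].
have [j hj] : exists j, a j.
  apply: NNPP => hnj; move/eqP: hane; apply; apply/ffunP => j; rewrite ffunE.
  by apply/negbTE/negP => hj; apply: hnj; exists j.
have [s hs] := mkperm h0 hcl hcnt j.
pose h := g0 *m perm_mx s *m invmx g0.
have hu : h \in unitmx by rewrite !unitmx_mul hg0 unitmx_perm unitmx_inv hg0.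
have hQ : forall w : {ffun 'I_n -> bool}, w \in V0 -> h *m Q w = (if w j then -1 else 1) *: (Q w *m h).
  move=> w hw.
  have hp := @perm_diag K n s w (w j) (fun i => hs w i hw).
  rewrite /h /Q.
  move: (perm_mx s) (diag_mx (sv K w)) hp => P S hp.
  rewrite -!mulmxA !(mulKmx hg0) !mulmxA -[g0 *m P *m S]mulmxA hp.
  by rewrite -scalemxAr -scalemxAl !mulmxA.
have sgn_nz (b : bool) : (if b then -1 else 1 : K) != 0.
  by case: b; rewrite ?oppr_eq0 oner_eq0.
have hcent : pgl_centralizer D h.
  split => // B hB.
  have [w [hw hBw]] := Qnorm _ hB.
  have hwV : w \in V0 by apply/inV0; split => //; exact: DQ hB hBw.
  case: hBw => c hc ->.
  exists (if w j then -1 else 1); first exact: sgn_nz.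
  rewrite -scalemxAr -scalemxAl hQ // -scalemxAl (mulmxK hu).
  by rewrite !scalerA mulrC.
case: hA0a => c0 hc0 hA0c.
have [e0 he0 hA0A0] := hsq _ hA0.
apply: hconn.
exists (fun X => X *m A0 = A0 *m X), (fun X => X *m A0 = (- A0) *m X); split.
- by split; apply: closed_comm.
- move=> X [hX hXc].
  have [c hc hXA] := hXc _ hA0.
  have hXA' : X *m A0 = c *: (A0 *m X) by rewrite scalemxAl -hXA (mulmxKV hX).
  have cc : c * c = 1.
    have E2 : X *m A0 *m A0 = (c * c) *: (A0 *m A0 *m X).
      by rewrite hXA' -scalemxAl -mulmxA hXA' -scalemxAr scalerA mulmxA.
    have E : X *m (A0 *m A0) *m invmx X = (c * c) *: (A0 *m A0).
      by rewrite mulmxA E2 -scalemxAl (mulmxK hX).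
    move: E; rewrite hA0A0 -scalemxAr -scalemxAl mulmx1 (mulmxV hX) scalerA.
    move/(scalar_inj hn0)/eqP; rewrite -subr_eq0 -{1}(mul1r e0) -mulrBl mulf_eq0.
    by rewrite (negbTE he0) orbF subr_eq0 eq_sym => /eqP.
  have : (c - 1) * (c + 1) = 0 by rewrite mulrDr mulrBl mulr1 mul1r cc addrA subrK subrr.
  move/eqP; rewrite mulf_eq0 subr_eq0 addr_eq0 => /orP [] /eqP hc'.
    by left; rewrite hXA' hc' scale1r.
  by right; rewrite hXA' hc' scaleN1r mulNmx.
- exists 1%:M; split; last by rewrite mul1mx mulmx1.
  split; first exact: unitmx1.
  by move=> B hB; exists 1; rewrite ?oner_eq0 // invmx1 mul1mx mulmx1 scale1r.
- exists h; split => //.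
  by rewrite hA0c -scalemxAr hQ // hj /= scaleN1r mulNmx scalerN scalemxAl.
- move=> X [hX _] h1 h2.
  have : A0 *m X + A0 *m X = 0 by rewrite -{1}h1 h2 mulNmx addNr.
  rewrite -mulr2n -scaler_nat => /eqP; rewrite scaler_eq0 (negbTE hchar) /= => /eqP hz.
  have hAX : A0 *m X \in unitmx by rewrite unitmx_mul hX (hunit _ hA0).
  by move: hAX; rewrite hz; apply: unit0_false hn0.
Qed.
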